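(* Let $E$ be a normed vector space with induced metric $d$, let $V:E\to E$ be a map, and let $S\subset E$ be closed. Suppose that for each $a\in S$ there exist an open neighborhood $\Omega_a$ of $a$ and $K_a>0$ such that $$\limsup_{h\to0^+}\frac{d(x+hV(x),S)-d(x,S)}{h}\le K_a\,d(x,S)\quad\text{for all }x\in\Omega_a.$$ Then $S$ is positively invariant with respect to $V$: every forward solution $\sigma:[0,\delta)\to E$ of $V$ with $\sigma(0)\in S$ satisfies $\sigma(t)\in S$ for all $t\in[0,\delta)$.
   Context: $d(x,S):=\inf_{y\in S}d(x,y)$. A forward solution of $V$ is a continuous curve $\sigma:[0,\delta)\to E$ ($\delta>0$) such that for every $s\in[0,\delta)$, $\|\sigma(s+h)-\sigma(s)-hV(\sigma(s))\|=o(h)$ as $h\to0^+$, i.e. the right derivative of $\sigma$ at $s$ exists and equals $V(\sigma(s))$. *)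

(* Defs.v *)
From HB Require Import structures.
From mathcomp Require Import all_boot all_order all_algebra.
From mathcomp Require Import all_classical all_reals all_analysis.
Set Implicit Arguments. Unset Strict Implicit. Unset Printing Implicit Defensive.
Import Order.TTheory GRing.Theory Num.Theory.
Import numFieldNormedType.Exports.
Local Open Scope classical_set_scope.
Local Open Scope ring_scope.

Definition dist_set (R : realType) (E : normedModType R) (x : E) (S : set E) : R :=
  inf [set `|x - y| | y in S].

Definition forward_solution (R : realType) (E : normedModType R)
    (V : E -> E) (delta : R) (sigma : R -> E) : Prop :=
  0 < delta /\
  {within `[0, delta[, continuous sigma} /\
  forall s, 0 <= s < delta ->
    (fun h : R => h^-1 * `|sigma (s + h) - sigma s - h *: V (sigma s)|)
      @ 0^'+ --> (0 : R).

(* Main.v *)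
Require Import Defs.
From HB Require Import structures.
From mathcomp Require Import all_boot all_order all_algebra.
From mathcomp Require Import all_classical all_reals all_analysis.
From mathcomp Require Import ring lra.
Import Order.TTheory GRing.Theory Num.Theory.
Import numFieldNormedType.Exports.
Local Open Scope classical_set_scope.
Local Open Scope ring_scope.

Section D.
Variables (R : realType) (E : normedModType R).

Lemma dist_lb (x : E) (S : set E) : has_lbound [set `|x - y| | y in S].
Proof. by exists 0 => _ [y _ <-]. Qed.

Lemma dist_ge0 (x : E) S : 0 <= dist_set x S.
Proof.
rewrite /dist_set; have [->|/set0P[y Sy]] := eqVneq S set0.
  by rewrite image_set0 inf0.
by apply: lb_le_inf; [exists `|x - y|; exists y|move=> _ [z _ <-]].
Qed.

Lemma dist_le (x y : E) S : S y -> dist_set x S <= `|x - y|.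
Proof. by move=> Sy; apply: ge_inf; [exact: dist_lb| exists y]. Qed.

Lemma dist_lip (x y : E) S : S !=set0 -> dist_set x S <= dist_set y S + `|x - y|.
Proof.
move=> [z0 Sz0]; rewrite -lerBlDr /dist_set; apply: lb_le_inf.
  by exists `|y - z0|; exists z0.
move=> _ [z Sz <-]; rewrite lerBlDr -/(dist_set x S).
apply: (le_trans (@dist_le x z S Sz)).
have -> : x - z = (x - y) + (y - z) by rewrite addrA subrK.
by rewrite addrC ler_normD.
Qed.

Lemma dist0_closed (x : E) S : closed S -> S !=set0 -> dist_set x S = 0 -> S x.
Proof.
move=> cS [y0 Sy0] d0; apply: cS => B /nbhs_ballP [e /= e0 eB].
have hinf : has_inf [set `|x - y| | y in S].
  by split; [exists `|x - y0|; exists y0|exact: dist_lb].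
have [_ [z Sz <-]] := inf_adherent e0 hinf.
rewrite -/(dist_set x S) d0 add0r => xz.
by exists z; split => //; apply: eB; rewrite -ball_normE.
Qed.
End D.
Lemma cont_at (R : realType) (E : normedModType R) (sigma : R -> E) delta s e :
  {within `[0, delta[, continuous sigma} -> 0 <= s < delta -> 0 < e ->
  exists2 d, 0 < d & forall u, 0 <= u < delta -> `|s - u| < d -> `|sigma s - sigma u| < e.
Proof.
move=> /subspace_continuousP hc hs e0.
have := hc s; rewrite /= in_itv /= hs => /(_ erefl).
move=> /fcvgrPdist_lt /(_ e e0) /nbhs_ballP [d /= d0 Hd].
exists d => // u hu su; have := Hd u; rewrite /from_subspace; apply.
  by rewrite /ball /=.
by rewrite /= in_itv /= hu.
Qed.

Lemma right_near (R : realType) (P : R -> Prop) :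
  (\forall h \near 0^'+, P h) -> exists2 d : R, 0 < d & forall h, 0 < h < d -> P h.
Proof.
move=> /nbhs_ballP [d /= d0 Hd]; exists d => // h /andP[h0 hd]; apply: Hd => //.
by rewrite /ball /= sub0r normrN gtr0_norm.
Qed.

Lemma deriv_near (R : realType) (F : R -> R) e :
  (fun h : R => h^-1 * F h) @ 0^'+ --> (0 : R) -> 0 < e ->
  exists2 d : R, 0 < d & forall h, 0 < h < d -> F h < e * h.
Proof.
move=> /fcvgrPdist_lt /(_ e) H e0; have := H e0.
move=> /right_near [d d0 Hd]; exists d => // h /andP[h0 hd].
have := Hd h; rewrite h0 hd => /(_ erefl) /=; rewrite sub0r normrN.
move=> /(le_lt_trans (ler_norm _)).
by rewrite -ltr_pdivrMr // mulrC.
Qed.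

Lemma esup_near (R : realType) (f : R -> R) c c' :
  (limf_esup (fun h => (f h)%:E) 0^'+ <= c%:E)%E -> c < c' ->
  exists2 d : R, 0 < d & forall h, 0 < h < d -> f h < c'.
Proof.
move=> H cc; have : (limf_esup (fun h => (f h)%:E) 0^'+ < c'%:E)%E.
  by apply: (le_lt_trans H); rewrite lte_fin.
move=> /ereal_inf_lt [_ [V FV <-] hV].
have : \forall h \near 0^'+, f h < c'.
  apply: filterS FV => h Vh; rewrite -lte_fin; apply: le_lt_trans hV.
  by apply: ereal_sup_ubound; exists h.
exact: right_near.
Qed.

Lemma real_ind (R : realType) (a b : R) (P : R -> Prop) : a <= b ->
 (forall s, a <= s <= b -> (forall u, a <= u < s -> P u) -> P s) ->
 (forall s, a <= s < b -> (forall u, a <= u <= s -> P u) ->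
    exists2 e, 0 < e & forall u, s < u < s + e -> P u) ->
 forall u, a <= u <= b -> P u.
Proof.
move=> ab H1 H2.
pose A := [set s | a <= s <= b /\ forall u, a <= u <= s -> P u].
have Pa : P a by apply: H1; [rewrite lexx ab | move=> u; lra].
have Aa : A a.
  split; first by rewrite lexx ab.
  by move=> u /andP[h1 h2]; have -> : u = a by apply/eqP; rewrite eq_le h1 h2.
have hs : has_sup A by split; [exists a | exists b => x [/andP[_ ->]]].
have as0 : a <= sup A by apply: sup_upper_bound.
have s0b : b >= sup A by apply: ge_sup; [exists a| move=> x [/andP[_ ->]]].
have below : forall u, a <= u < sup A -> P u.
  move=> u /andP[au us].
  have su0 : 0 < sup A - u by rewrite subr_gt0.
  have [e [/andP[_ eb] Ae] ue] := sup_adherent su0 hs.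
  by apply: Ae; rewrite au /=; move: ue; rewrite opprB addrC subrK => /ltW.
have Ps0 : P (sup A) by apply: H1 => //; rewrite as0 s0b.
have As0 : A (sup A).
  split; first by rewrite as0 s0b.
  move=> u /andP[au]; rewrite le_eqVlt => /orP[/eqP -> //|us].
  by apply: below; rewrite au us.
have [sb|] := ltP (sup A) b; last first.
  move=> bs; have eb : sup A = b by apply/eqP; rewrite eq_le s0b bs.
  by move=> u hu; apply: As0.2; rewrite eb.
have [e e0 He] : exists2 e, 0 < e & forall u, sup A < u < sup A + e -> P u.
  by apply: H2 => //; [rewrite as0 sb | exact: As0.2].
pose m := Num.min e (b - sup A).
have m0 : 0 < m by rewrite lt_min e0 subr_gt0.
have me : m <= e by rewrite ge_min lexx.
have mb : m <= b - sup A by rewrite ge_min lexx orbT.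
have : A (sup A + m / 2).
  split; first by apply/andP; split; lra.
  move=> u /andP[au hu]; have [us|su] := leP u (sup A).
    by apply: As0.2; rewrite au us.
  by apply: He; apply/andP; split; lra.
move=> /(sup_upper_bound hs); lra.
Qed.

Lemma dini (R : realType) (g : R -> R) (a b : R) : a <= b ->
  (forall s, a < s <= b -> forall e, 0 < e -> exists2 d, 0 < d &
     forall u, a <= u < s -> s - u < d -> g s - g u < e) ->
  (forall s, a <= s < b -> exists2 d, 0 < d & forall h, 0 < h < d -> g (s + h) <= g s) ->
  forall u, a <= u <= b -> g u <= g a.
Proof.
move=> ab HL HR; apply: real_ind => // s /andP[hsa sb] IH.
  have [sa|sa] := eqVneq s a; first by rewrite sa.
  have {sa}hsa' : a < s by rewrite lt_neqAle eq_sym sa.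
  rewrite leNgt; apply/negP => gas.
  have ga0 : 0 < g s - g a by rewrite subr_gt0.
  have [d d0 Hd] := HL s (introT andP (conj hsa' sb)) (g s - g a) ga0.
  pose m := Num.min d (s - a).
  have m0 : 0 < m by rewrite lt_min d0 subr_gt0.
  have md : m <= d by rewrite ge_min lexx.
  have ms : m <= s - a by rewrite ge_min lexx orbT.
  have h1 : a <= s - m / 2 < s by apply/andP; split; lra.
  have := Hd _ h1; have := IH _ h1.
  move=> h2 h3; have : s - (s - m / 2) < d by lra.
  by move=> /h3; lra.
have [d d0 Hd] := HR s (introT andP (conj hsa sb)).
exists d => // u /andP[su ud].
have := Hd (u - s); rewrite subrKC; move=> h; apply: (le_trans (h _)).
  by apply/andP; split; lra.
by apply: IH; rewrite lexx hsa.
Qed.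

Arguments cont_at {R E sigma delta s e}.
Arguments deriv_near {R F e}.
Arguments esup_near {R f c c'}.

Theorem theorem6p6 (R : realType) (E : normedModType R) (V : E -> E) (S : set E) :
  closed S ->
  (forall a, S a -> exists (Omega : set E) (K : R),
     open Omega /\ Omega a /\ 0 < K /\
     forall x, Omega x ->
       (limf_esup
          (fun h : R => ((dist_set (x + h *: V x) S - dist_set x S) / h)%:E)
          0^'+ <= (K * dist_set x S)%:E)%E) ->
  forall (delta : R) (sigma : R -> E),
    forward_solution V delta sigma -> S (sigma 0) ->
    forall t, 0 <= t < delta -> S (sigma t).
Proof.
move=> cS Hloc delta sigma [d0 [hcont hder]] S0 t /andP[t0 td].
have Sne : S !=set0 by exists (sigma 0).
pose g u := dist_set (sigma u) S.
have gS : forall u, S (sigma u) -> g u = 0.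
  move=> u Su; apply/eqP; rewrite eq_le dist_ge0 andbT.
  by have := @dist_le R E (sigma u) (sigma u) S Su; rewrite subrr normr0.
have g0S : forall u, g u <= 0 -> S (sigma u).
  move=> u gu; apply: dist0_closed => //; apply/eqP; rewrite eq_le gu dist_ge0.
  done.
apply: (@real_ind R 0 t (fun u => S (sigma u))); last by rewrite lexx t0.
- exact: t0.
- move=> s /andP[s0 st] IH.
  have [s0'|sp] := eqVneq s 0; first by rewrite s0'.
  have {sp}sp : 0 < s by rewrite lt_neqAle eq_sym sp s0.
  apply: g0S; rewrite leNgt; apply/negP => gp.
  have sd : 0 <= s < delta by rewrite s0 /=; lra.
  have [d dp Hd] := cont_at hcont sd gp.
  pose m := Num.min d s.
  have m0 : 0 < m by rewrite lt_min dp sp.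
  have md : m <= d by rewrite ge_min lexx.
  have ms : m <= s by rewrite ge_min lexx orbT.
  have hu : 0 <= s - m / 2 < s by apply/andP; split; lra.
  have Su := IH _ hu.
  have : `|sigma s - sigma (s - m / 2)| < g s.
    apply: Hd; first by apply/andP; split; lra.
    rewrite opprB addrC subrK ger0_norm; lra.
  by rewrite ltNge (@dist_le R E (sigma s) _ S Su).
- move=> s /andP[s0 st] IH.
  have Ss : S (sigma s) by apply: IH; rewrite s0 lexx.
  have [Om [K [oO [Oa [K0 HK]]]]] := Hloc _ Ss.
  have /nbhs_ballP[r /= r0 Hr] : nbhs (sigma s) Om by apply: open_nbhs_nbhs; split.
  have sd : 0 <= s < delta by rewrite s0 /=; lra.
  have r10 : 0 < Num.min r 1 by rewrite lt_min r0 ltr01.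
  have [d1 d10 Hd1] := cont_at hcont sd r10.
  pose eta := Num.min (d1 / 2) (Num.min ((delta - s) / 2) (1 / (2 * K))).
  have eta0 : 0 < eta.
    have p1 : 0 < d1 / 2 by lra.
    have p2 : 0 < (delta - s) / 2 by lra.
    have p3 : 0 < 1 / (2 * K) by rewrite divr_gt0 // mulr_gt0.
    by rewrite !lt_min p1 p2 p3.
  have etad1 : eta <= d1 / 2 by rewrite ge_min lexx.
  have etad : eta <= (delta - s) / 2 by rewrite ge_min ge_min lexx orbT.
  have etaK : K * eta <= 1 / 2.
    have : eta <= 1 / (2 * K) by rewrite ge_min ge_min lexx !orbT.
    rewrite ler_pdivlMr ?mulr_gt0 // => h.
    rewrite ler_pdivlMr //; lra.
  have inI : forall u, s <= u <= s + eta ->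
      0 <= u < delta /\ Om (sigma u) /\ g u < 1.
    move=> u /andP[su ue].
    have ud : 0 <= u < delta by apply/andP; split; lra.
    have := Hd1 u ud; rewrite ler0_norm; last lra.
    move=> /(_ ltac:(lra)); rewrite lt_min => /andP[h1 h2].
    split => //; split; first by apply: Hr; rewrite -ball_normE.
    apply: le_lt_trans h2; rewrite distrC.
    by apply: dist_le.
  pose A := [set g u | u in [set u | s <= u <= s + eta]].
  have As : A (g s) by exists s => //=; rewrite lexx /=; lra.
  have hA : has_sup A.
    split; first by exists (g s).
    by exists 1 => _ [u hu <-]; apply/ltW; have [_ [_ ]] := inI u hu.
  pose M := sup A.
  have gM : forall u, s <= u <= s + eta -> g u <= M.
    by move=> u hu; apply: sup_upper_bound => //; exists u.
  have M0 : 0 <= M by rewrite -(gS _ Ss); apply: gM; rewrite lexx /=; lra.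
  have key : forall eps, 0 < eps -> M <= (K * M + eps) * eta.
    move=> eps eps0; apply: ge_sup; first by exists (g s).
    move=> _ [u hu <-].
    pose c := K * M + eps.
    have c0 : 0 < c by rewrite /c; apply: ltr_wpDl => //; apply: mulr_ge0 => //; exact: ltW.
    pose g' v := g v - c * v.
    have seta : s <= s + eta by lra.
    have hd : forall v, s <= v <= s + eta -> g' v <= g' s.
      apply: (@dini R g' s (s + eta) seta).
      + move=> s' /andP[ss' s'b] e e0.
        have s'd : 0 <= s' < delta by apply/andP; split; lra.
        have [d dp Hd] := cont_at hcont s'd e0.
        exists d => // v /andP[sv vs'] hvd.
        have vd : 0 <= v < delta by apply/andP; split; lra.
        have := Hd v vd; rewrite ger0_norm; last lra.
        move=> /(_ hvd) h.
        have := @dist_lip R E (sigma s') (sigma v) S Sne.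
        rewrite /g' -/(g s') -/(g v) => h2.
        have : 0 <= c * (s' - v) by apply: mulr_ge0; [exact: ltW| lra].
        rewrite mulrBr; lra.
      + move=> s' /andP[ss' s'b].
        have [s'd [Ox gs'1]] := inI s' ltac:(apply/andP; split; lra).
        have eps2 : 0 < eps / 2 by lra.
        have [d2 d20 Hd2] := esup_near (HK _ Ox) (ltr_pwDr eps2 (lexx (K * dist_set (sigma s') S))).
        have [d3 d30 Hd3] := deriv_near (hder s' s'd) eps2.
        exists (Num.min d2 d3); first by rewrite lt_min d20 d30.
        move=> h /andP[h0]; rewrite lt_min => /andP[hd2 hd3].
        have := Hd2 h; rewrite h0 hd2 => /(_ erefl); rewrite ltr_pdivrMr // => h1.
        have := Hd3 h; rewrite h0 hd3 => /(_ erefl) => h2.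
        have := @dist_lip R E (sigma (s' + h)) (sigma s' + h *: V (sigma s')) S Sne.
        rewrite opprD addrA => h3.
        have gs'M : g s' <= M by apply: gM; apply/andP; split; lra.
        have p1 : K * g s' * h <= K * M * h.
          by rewrite ler_pM2r // ler_pM2l.
        rewrite /g' /c; rewrite /g in gs'M p1 |- *.
        rewrite mulrDl in h1; rewrite mulrDl mulrDr mulrDl.
        lra.
    have := hd u hu.
    rewrite /g' (gS _ Ss) => h.
    have : c * (u - s) <= c * eta.
      by apply: ler_wpM2l; [exact: ltW|move: hu => /andP[_ ?]; lra].
    rewrite mulrBr /c => h2; rewrite /c in h; lra.
  have MM : M <= 0.
    rewrite leNgt; apply/negP => Mp.
    have e0 : 0 < M / (4 * eta) by apply: divr_gt0 => //; lra.
    have := key _ e0.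
    have -> : (K * M + M / (4 * eta)) * eta = M * (K * eta) + M / 4.
      by field; lra.
    have : M * (K * eta) <= M * (1 / 2) by apply: ler_wpM2l.
    lra.
  exists eta => // u /andP[su ue].
  apply: g0S; apply: le_trans MM; apply: gM; apply/andP; split; lra.
Qed.
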